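(* Every profinite-$C$ group is metabelian.
   Context: A permutable complement of a subgroup $H$ of a group $G$ is a subgroup $K$ with $G=HK$ and $H\cap K=1$. A profinite group $G$ is a profinite-$C$ group if every closed subgroup of $G$ has a closed permutable complement in $G$. *)

(* Defs.v *)
From HB Require Import structures.
From mathcomp Require Import all_boot all_order all_algebra.
From mathcomp Require Import all_classical all_reals all_analysis.
Set Implicit Arguments. Unset Strict Implicit. Unset Printing Implicit Defensive.
Local Open Scope classical_set_scope.

Record topGroup (T : topologicalType) := TopGroup {
  tg_mul : T -> T -> T;
  tg_inv : T -> T;
  tg_one : T;
  tg_mulA : forall x y z, tg_mul x (tg_mul y z) = tg_mul (tg_mul x y) z;
  tg_mul1g : forall x, tg_mul tg_one x = x;
  tg_mulg1 : forall x, tg_mul x tg_one = x;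
  tg_mulVg : forall x, tg_mul (tg_inv x) x = tg_one;
  tg_mulgV : forall x, tg_mul x (tg_inv x) = tg_one;
  tg_mul_cont : continuous (fun p : T * T => tg_mul p.1 p.2);
  tg_inv_cont : continuous tg_inv
}.

Definition profinite (T : topologicalType) (G : topGroup T) : Prop :=
  [/\ compact [set: T], hausdorff_space T & totally_disconnected [set: T]].

Section GroupNotions.
Context {T : topologicalType} (G : topGroup T).
Local Notation mul := (tg_mul G).
Local Notation inv := (tg_inv G).
Local Notation one := (tg_one G).

Definition is_subgroup (H : set T) : Prop :=
  [/\ H one, forall x y, H x -> H y -> H (mul x y) & forall x, H x -> H (inv x)].

Definition is_closed_subgroup (H : set T) : Prop := is_subgroup H /\ closed H.

Definition perm_complement (H K : set T) : Prop :=
  is_subgroup K /\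
  (forall g, exists h k, [/\ H h, K k & g = mul h k]) /\
  H `&` K = [set one].

Definition profinite_C : Prop :=
  profinite G /\
  forall H, is_closed_subgroup H ->
    exists K, is_closed_subgroup K /\ perm_complement H K.

Definition commutator (x y : T) : T := mul (mul (inv x) (inv y)) (mul x y).

Definition derived_subgroup : set T :=
  fun z => forall H, is_subgroup H -> (forall x y, H (commutator x y)) -> H z.

Definition metabelian : Prop :=
  forall x y, derived_subgroup x -> derived_subgroup y -> mul x y = mul y x.
End GroupNotions.

(* Main.v *)
From HB Require Import structures.
Require Import Defs.
From mathcomp Require Import all_boot all_order all_algebra.
From mathcomp Require Import all_classical all_reals all_analysis.
From mathcomp Require Import all_fingroup all_solvable.
From mathcomp Require finmap.
Set Implicit Arguments. Unset Strict Implicit. Unset Printing Implicit Defensive.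
Section FinPart.
Local Open Scope group_scope.


Variable gT : finGroupType.
Implicit Types G H K N A L M : {group gT}.

Definition complemented G := forall H, H \subset G ->
  exists K : {group gT}, [/\ K \subset G, H * K = G & H :&: K = 1].

Lemma complS G L : complemented G -> L \subset G -> complemented L.
Proof.
move=> cG sLG H sHL; have [K [sKG defG tiHK]] := cG H (fintype.subset_trans sHL sLG).
exists (K :&: L)%G; split; first exact: finset.subsetIr.
  by rewrite group_modl // defG; apply/finset.setIidPr.
by apply/trivgP; rewrite -tiHK finset.setIS ?finset.subsetIl.
Qed.

Lemma der1_cent_prime G N : normal N G -> prime #|N| -> G^`(1) \subset 'C(N).
Proof.
move=> /andP[sNG nNG] pN.
have abG : abelian (conj_aut N @* G).
  apply: abelianS (Aut_conj_aut _ _) _; exact/Aut_cyclic_abelian/prime_cyclic.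
have : conj_aut N @* G^`(1) \subset [1].
  by rewrite morphim_der //; move/derG1P: abG => ->.
have sDN : G^`(1) \subset 'N(N) := fintype.subset_trans (der_sub 1 G) nNG.
rewrite sub_morphim_pre //. rewrite -ker_conj_aut. by [].
Qed.


Lemma prime_dvd_fact_le r n : prime r -> r %| n`! -> r <= n.
Proof.
move=> pr; elim: n => [|n IH]; first by rewrite fact0 dvdn1 => /eqP r1; rewrite r1 in pr.
rewrite factS Euclid_dvdM // => /orP[/dvdn_leq -> //| /IH]; exact: leqW.
Qed.

Lemma core1_dvd_fact G K : K \subset G -> gcore K G = 1 -> #|G| %| factorial #|G : K|.
Proof.
move=> sKG c1.
pose nSA := actsRs_rcosets K G.
have ff : [faithful G, on rcosets K G | 'Rs].
  by rewrite /faithful astabRs_rcosets c1 setIg1.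
have iso := faithful_isom nSA ff.
rewrite (isom_card iso) /indexg -(@perm.card_Sym _ (rcosets K G)).
apply: cardSg; apply/fintype.subsetP => _ /morphimP[a _ Ga ->].
rewrite inE; apply/fintype.subsetP => x; rewrite inE actpermE /= /actby.
by case: ifP => [/andP[] //| _]; rewrite eqxx.
Qed.

Lemma simple_compl_abelian G : complemented G -> minnormal G G -> abelian G.
Proof.
move=> cG minGG; have [/andP[ntG _] minG] := mingroupP minGG.
have G1 : 1 < #|G| by rewrite cardG_gt1.
set q := pdiv #|G|; have pq : prime q by exact: pdiv_prime.
have [x Gx ox] := Cauchy pq (pdiv_dvd #|G|).
have sAG : <[x]> \subset G by rewrite cycle_subG.
have [K [sKG defG tiAK]] := cG _ sAG.
have cK : gcore K G = 1.
  apply/eqP; apply: contraT => ntC.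
  have eC : gcore K G :=: G.
    apply: (minG (gcore K G)%G); last first. apply: fintype.subset_trans (gcore_sub _ _) sKG.
    by rewrite /= ntC gcore_norm.
  have sAK : <[x]> \subset K by rewrite (fintype.subset_trans sAG) // -eC gcore_sub.
  move: tiAK; rewrite (finset.setIidPl sAK) => /(congr1 (fun X : {set gT} => #|X|)).
  by rewrite -[#|<[x]>|]/#[x] ox cards1 => q1; rewrite q1 in pq.
have iK : #|G : K| = q.
  have := Lagrange sKG; rewrite -{2}defG (TI_cardMg tiAK) -[#|<[x]>|]/#[x] ox mulnC.
  by move=> h; apply/eqP; rewrite -(eqn_pmul2r (cardG_gt0 K)) h.
have dv := core1_dvd_fact sKG cK; rewrite iK in dv.
have pG : q.-group G.
  apply/pgroupP => r pr rG; rewrite inE /=; apply/eqP/anti_leq.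
  rewrite prime_dvd_fact_le ?(dvdn_trans rG dv) //=.
  exact: pdiv_min_dvd (prime_gt1 pr) rG.
have ntZ : 'Z(G) :!=: 1 by rewrite (center_nil_eq1 (pgroup_nil pG)).
have eZ : 'Z(G) :=: G.
  apply: (minG (center G)%G); last exact: center_sub.
  by rewrite /= ntZ (normal_norm (center_normal G)).
by rewrite -eZ center_abelian.
Qed.

Lemma ab_der1 G : abelian G -> abelian G^`(1).
Proof. by move/derG1P => ->; exact: abelian1. Qed.

Lemma metab_sol G : abelian G^`(1) -> solvable G.
Proof. by move/derG1P => h; apply/derivedP; exists 2. Qed.

Theorem compl_metabelian n G : #|G| <= n -> complemented G -> abelian G^`(1).
Proof.
elim: n G => [|n IH] G leG cG; first by move: (cardG_gt0 G); rewrite lt0n; move: leG; rewrite leqn0 => ->.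
have IHp H : H \proper G -> abelian H^`(1).
  move=> pHG; apply: IH; first by rewrite -ltnS (leq_trans (proper_card pHG)).
  exact: complS (proper_sub pHG).
have [G1|ntG] := eqsVneq G 1; first by apply: ab_der1; rewrite G1 abelian1.
have [N minN sNG] := minnormal_exists ntG (normG G).
have [/andP[ntN nNG] minNG] := mingroupP minN.
have [eNG|neNG] := eqVneq N G.
  by apply: ab_der1; apply: simple_compl_abelian => //; move: minN; rewrite eNG.
have nN : normal N G by rewrite /normal sNG.
have abN : abelian N.
  have [K0 [sK0G defG0 tiNK0]] := cG N sNG.
  have pN : N \proper G by rewrite finset.properEneq neNG.
  have pK0 : K0 \proper G.
    rewrite finset.properEneq sK0G andbT; apply: contraNneq ntN => eK0.
    by rewrite -tiNK0 eK0 (finset.setIidPl sNG).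
  have solG : solvable G.
    rewrite (series_sol nN) metab_sol ?IHp //=.
    by rewrite -defG0 quotientMidl quotient_sol // metab_sol ?IHp.
  have [_ _ /is_abelemP[p _ /abelem_abelian]] := minnormal_solvable minN sNG solG.
  by [].
have N1 : 1 < #|N| by rewrite cardG_gt1.
set q := pdiv #|N|; have pq : prime q by exact: pdiv_prime.
have [a Na oa] := Cauchy pq (pdiv_dvd #|N|).
have sAN : <[a]> \subset N by rewrite cycle_subG.
have sAG := fintype.subset_trans sAN sNG.
have [K [sKG defG tiAK]] := cG _ sAG.
have nKG : K \subset 'N(N) := fintype.subset_trans sKG nNG.
have tiNK : N :&: K = 1.
  apply/eqP; apply: contraT => ntM.
  have eM : N :&: K :=: N.
    apply: (minNG (N :&: K)%G); last exact: finset.subsetIl.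
    rewrite /= ntM /= -defG mul_subG //.
      by apply: cents_norm; apply: fintype.subset_trans sAN (sub_abelian_cent abN (finset.subsetIl _ _)).
    by rewrite normsI ?normG.
  have sAK : <[a]> \subset K by rewrite (fintype.subset_trans sAN) // -eM finset.subsetIr.
  move: tiAK; rewrite (finset.setIidPl sAK) => /(congr1 (fun X : {set gT} => #|X|)).
  by rewrite -[#|<[a]>|]/#[a] oa cards1 => q1; rewrite q1 in pq.
have eNA : N :=: <[a]>.
  have := group_modl K sAN; rewrite defG (finset.setIidPr sNG) finset.setIC tiNK mulg1.
  by move=> ->.
have pN : prime #|N| by rewrite eNA -[#|<[a]>|]/#[a] oa.
have defNK : N * K = G by rewrite eNA.
have pK : K \proper G.
  rewrite finset.properEneq sKG andbT; apply: contraNneq ntN => eK.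
  by rewrite -tiNK eK (finset.setIidPl sNG).
have abK := IHp _ pK.
have sDC := der1_cent_prime nN pN.
have sD2N : G^`(2) \subset N.
  have sD2G : G^`(2) \subset 'N(N) := fintype.subset_trans (der_sub 2 G) nNG.
  rewrite -quotient_sub1 // quotient_der // -defNK quotientMidl -quotient_der //.
  move/derG1P: abK => eK2; have -> : K^`(2) = 1 by exact: eK2.
  by rewrite quotient1.
apply/derG1P; apply/trivgP.
have [sND|nsND] := boolP (N \subset G^`(1)).
  set L := (K :&: G^`(1))%G.
  have defD : N * L = G^`(1).
    by rewrite /L /= group_modl // defNK (finset.setIidPr (der_sub 1 G)).
  have nLD : G^`(1) \subset 'N(L).
    rewrite -defD mul_subG ?normG //; apply: cents_norm; rewrite centsC.
    exact: fintype.subset_trans (finset.subsetIr _ _) sDC.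
  have abQ : abelian (G^`(1) / L) by rewrite -defD quotientMidr quotient_abelian.
  have sD2L : G^`(1)^`(1) \subset L := der1_min nLD abQ.
  rewrite -tiNK finset.subsetI sD2N /=.
  exact: fintype.subset_trans sD2L (finset.subsetIl _ _).
rewrite -(prime_TIg pN nsND) finset.subsetI sD2N.
exact: (der_subS 1 G).
Qed.


End FinPart.

Local Open Scope classical_set_scope.


Lemma normal_sep (T : topologicalType) : normal_space T ->
  forall A B : set T, closed A -> closed B -> A `&` B = set0 ->
  exists U V : set T, [/\ open U, open V, A `<=` U, B `<=` V & U `&` V = set0].
Proof.
move=> nT A B cA cB AB0.
have hB : set_nbhs A (~` B).
  apply/set_nbhsP; exists (~` B); split => //; first exact: closed_openC.
  by move=> a Aa Ba; have : (A `&` B) a by []; rewrite AB0.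
have [W /set_nbhsP [U [oU AU UW]] clW] := nT A cA _ hB.
exists U, (~` closure W); split => //.
- exact/closed_openC/closed_closure.
- by move=> b Bb /clW; apply.
- apply/seteqP; split => // u [Uu]; apply; exact/subset_closure/UW.
Qed.

Lemma zd_sep (T : topologicalType) : compact [set: T] -> hausdorff_space T ->
  totally_disconnected [set: T] ->
  forall x y : T, x <> y -> exists U, [/\ clopen U, U x & ~ U y].
Proof.
move=> cT hT tdT x y xy.
pose Q := \bigcap_(C in [set C : set T | clopen C /\ C x]) C.
have Qx : Q x by move=> C [].
have clQ : closed Q by apply: closed_bigI => C [[]].
suff Qcon : connected Q.
  have sQ : Q `<=` [set x].
    by rewrite -(tdT x I); apply: connected_component_max.
  apply: contrapT => nE.
  have Qy : Q y.
    move=> C [cC Cx]; apply: contrapT => nCy; apply: nE; exists C; split => //.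
  by apply: xy; have := sQ y Qy.
move=> B [b Bb] [C oC BQC] [D cD BQD].
have cB : closed B by rewrite BQD; exact: closedI.
have cA2 : closed (Q `&` ~` C) by apply: closedI => //; exact: open_closedC.
have dis : B `&` (Q `&` ~` C) = set0.
  by apply/seteqP; split => // q [+ [_ nCq]]; rewrite BQC => -[].
have [U [V [oU oV BU A2V UV0]]] := normal_sep (compact_normal hT cT) cB cA2 dis.
have QUV : Q `<=` U `|` V.
  move=> q Qq; have [Cq|nCq] := pselect (C q).
    by left; apply: BU; rewrite BQC.
  by right; apply: A2V.
have [W [cW Wx WUV]] : exists W, [/\ clopen W, W x & W `<=` U `|` V].
  apply: contrapT => nW.
  pose F := filter_from [set C : set T | clopen C /\ C x] (fun C => C `\` (U `|` V)).
  have FF : Filter F.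
    apply: filter_from_filter; first by exists setT; split => //; exact: clopenT.
    move=> i j [ci xi] [cj xj]; exists (i `&` j); first by split => //; exact: clopenI.
    by move=> z [[] ? ? ?]; split; split.
  have PF : ProperFilter F.
    apply: filter_from_proper => // i [ci xi]; apply: contrapT => /set0P/negP.
    rewrite negbK => /eqP i0; apply: nW; exists i; split => // z iz.
    apply: contrapT => nz; have : (i `\` (U `|` V)) z by [].
    by rewrite i0.
  have [p [_ clp]] := cT F PF filterT.
  move: clp; rewrite clusterE => clp.
  have Hp : forall C, clopen C -> C x -> (C `\` (U `|` V)) p.
    move=> E cE Ex; have := clp (E `\` (U `|` V)).
    have clE : closed (E `\` (U `|` V)).
      by apply: closedI; [case: cE|exact/open_closedC/openU].
    rewrite -(closure_id _).1 //; apply; exists E => //.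
  have Qp : Q p by move=> E [cE Ex]; have [] := Hp E cE Ex.
  by have [_] := Hp setT clopenT I; apply; apply: QUV.
have [Bx|nBx] := pselect (B x).
  have cZ : clopen (W `&` U).
    split; first by apply: openI => //; case: cW.
    have -> : W `&` U = W `&` ~` V.
      apply/seteqP; split => z [Wz]; first by move=> Uz; split => // Vz; have : (U `&` V) z by []; rewrite UV0.
      by move=> nVz; split => //; case: (WUV z Wz).
    by apply: closedI; [case: cW|exact: open_closedC].
  have QU : Q `<=` U by move=> q Qq; have [] := Qq _ (conj cZ (conj Wx (BU x Bx))).
  apply/seteqP; split; first by rewrite BQC => z [].
  move=> q Qq; apply: contrapT => nBq.
  have nCq : ~ C q by move=> Cq; apply: nBq; rewrite BQC.
  have : (U `&` V) q by split; [exact: QU|exact: A2V].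
  by rewrite UV0.
have nCx : ~ C x by move=> Cx; apply: nBx; rewrite BQC.
have Vx : V x by apply: A2V.
have cZ : clopen (W `&` V).
  split; first by apply: openI => //; case: cW.
  have -> : W `&` V = W `&` ~` U.
    apply/seteqP; split => z [Wz]; first by move=> Vz; split => // Uz; have : (U `&` V) z by []; rewrite UV0.
    by move=> nUz; split => //; case: (WUV z Wz).
  by apply: closedI; [case: cW|exact: open_closedC].
have QV : Q `<=` V by move=> q Qq; have [] := Qq _ (conj cZ (conj Wx Vx)).
have Qb : Q b by move: Bb; rewrite BQC => -[].
have : (U `&` V) b by split; [exact: BU|exact: QV].
by rewrite UV0.
Qed.

Section TopG.
Context (T : topologicalType) (G : topGroup T).
Local Notation m := (tg_mul G).
Local Notation inv := (tg_inv G).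
Local Notation one := (tg_one G).

Lemma mulA x y z : m x (m y z) = m (m x y) z. Proof. exact: tg_mulA. Qed.
Lemma mul1 x : m one x = x. Proof. exact: tg_mul1g. Qed.
Lemma mul1r x : m x one = x. Proof. exact: tg_mulg1. Qed.
Lemma mulV x : m (inv x) x = one. Proof. exact: tg_mulVg. Qed.
Lemma mulVr x : m x (inv x) = one. Proof. exact: tg_mulgV. Qed.
Lemma mulKg x y : m (inv x) (m x y) = y. Proof. by rewrite mulA mulV mul1. Qed.
Lemma mulKVg x y : m x (m (inv x) y) = y. Proof. by rewrite mulA mulVr mul1. Qed.
Lemma mulgK x y : m (m y x) (inv x) = y. Proof. by rewrite -mulA mulVr mul1r. Qed.
Lemma mulgKV x y : m (m y (inv x)) x = y. Proof. by rewrite -mulA mulV mul1r. Qed.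
Lemma inv_uniq x y : m x y = one -> inv x = y.
Proof. by move=> h; rewrite -[inv x]mul1r -h mulKg. Qed.
Lemma invK x : inv (inv x) = x. Proof. exact/inv_uniq/mulV. Qed.
Lemma invM x y : inv (m x y) = m (inv y) (inv x).
Proof. by apply: inv_uniq; rewrite -mulA mulKVg mulVr. Qed.
Lemma inv1 : inv one = one. Proof. by apply: inv_uniq; rewrite mul1. Qed.

Lemma mul_cvg (I : Type) (F : set_system I) (FF : Filter F) (f g : I -> T) a b :
  f @ F --> a -> g @ F --> b -> (fun x => m (f x) (g x)) @ F --> m a b.
Proof.
move=> fa gb; apply: (@continuous2_cvg _ _ _ _ F FF f g (fun x y => m x y) a b) => //.
exact: (@tg_mul_cont T G (a, b)).
Qed.

Lemma inv_cvg (I : Type) (F : set_system I) (FF : Filter F) (f : I -> T) a :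
  f @ F --> a -> (fun x => inv (f x)) @ F --> inv a.
Proof. by move=> fa; apply: (continuous_cvg _ _ fa); exact: tg_inv_cont. Qed.

Definition stabr (U : set T) : set T := [set g | forall a, U (m a g) <-> U a].

Lemma stabr_sub U : U one -> stabr U `<=` U.
Proof. by move=> U1 g /(_ one); rewrite mul1 => ->. Qed.

Lemma stabr_subgroup U : is_subgroup G (stabr U).
Proof.
split.
- by move=> a; rewrite mul1r.
- by move=> x y Sx Sy a; rewrite mulA Sy Sx.
- by move=> x Sx a; rewrite -(Sx (m a (inv x))) mulgKV.
Qed.

Lemma near_mul a b (P : set T) : nbhs (m a b) P ->
  \forall x \near a & y \near b, P (m x y).
Proof. by move=> hP; exact: (@tg_mul_cont T G (a, b)). Qed.

Lemma stabr_nbhs U : compact [set: T] -> clopen U -> nbhs one (stabr U).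
Proof.
move=> cT [oU cU].
have := (iffLR (compact_near_coveringP [set: T])) cT T (nbhs one)
  (fun g a => U (m a g) <-> U a) _.
move=> /(_ _) h; apply: filterS (h _) => [g hg a|a _]; first exact: hg.
have [Ua|nUa] := pselect (U a).
  have h1 : nbhs (m a one) U by rewrite mul1r; exact: open_nbhs_nbhs.
  have h2 : \forall x \near a & y \near one, U x.
    exists (U, setT); first by split; [exact: open_nbhs_nbhs|exact: filterT].
    by case=> p q [].
  by apply: filterS (filterI (near_mul h1) h2) => -[p q] /= [].
have h1 : nbhs (m a one) (~` U).
  by rewrite mul1r; apply: open_nbhs_nbhs; split => //; exact: closed_openC.
have h2 : \forall x \near a & y \near one, (~` U) x.
  exists (~` U, setT); last by case=> p q [].
  by split; [apply: open_nbhs_nbhs; split => //; exact: closed_openC|exact: filterT].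
by apply: filterS (filterI (near_mul h1) h2) => -[p q] /= [].
Qed.

Section Quot.
Variable N : set T.
Hypothesis sgN : is_subgroup G N.
Hypothesis nN : nbhs one N.
Variable s : seq T.
Hypothesis cov : forall g, exists2 y, y \in s & N (m g (inv y)).

Lemma N1 : N one. Proof. by case: sgN. Qed.
Lemma NM x y : N x -> N y -> N (m x y). Proof. by case: sgN => _ h _; exact: h. Qed.
Lemma NV x : N x -> N (inv x). Proof. by case: sgN => _ _ h; exact: h. Qed.
Lemma Ntr x y z : N (m x (inv y)) -> N (m y (inv z)) -> N (m x (inv z)).
Proof. by move=> h1 h2; have := NM h1 h2; rewrite -mulA mulKg. Qed.
Lemma Nsym x y : N (m x (inv y)) -> N (m y (inv x)).
Proof. by move=> /NV; rewrite invM invK. Qed.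

Definition rep (i : 'I_(size s).+1) : T := nth one (one :: s) i.
Definition idx (g : T) : 'I_(size s).+1 :=
  odflt ord0 [pick i : 'I_(size s).+1 | `[< N (m g (inv (rep i))) >] ].

Lemma idx_spec g : N (m g (inv (rep (idx g)))).
Proof.
rewrite /idx; case: pickP => [i /asboolP //|h] /=.
have [y ys Ny] := cov g.
have lt : (index y s).+1 < (size s).+1 by rewrite ltnS index_mem.
have := h (Ordinal lt); rewrite /rep /= nth_index //.
by move/asboolP.
Qed.

Lemma idx_eq g h : N (m g (inv h)) -> idx g = idx h.
Proof.
move=> Ngh; rewrite /idx; congr odflt; apply: eq_pick => i /=.
apply/asboolP/asboolP => H.
  exact: Ntr (Nsym Ngh) H.
exact: Ntr Ngh H.
Qed.

Lemma idx_eqP g h : idx g = idx h -> N (m g (inv h)).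
Proof. by move=> e; apply: Ntr (idx_spec g) _; rewrite e; exact/Nsym/idx_spec. Qed.

Lemma idx_can g : idx (rep (idx g)) = idx g.
Proof. exact/idx_eq/Nsym/idx_spec. Qed.

Definition Q0 := {i : 'I_(size s).+1 | idx (rep i) == i}.
Definition cz (g : T) : Q0 := exist _ (idx g) (introT eqP (idx_can g)).

Definition sigma (g : T) (c : Q0) : Q0 := cz (m (rep (val c)) g).

Lemma sigma_inj g : injective (sigma g).
Proof.
move=> c1 c2 /(congr1 val) /= /idx_eqP.
rewrite invM mulA mulgK => /idx_eq e; apply: val_inj.
by rewrite -(eqP (valP c1)) -(eqP (valP c2)) e.
Qed.

Definition pi (g : T) : {perm Q0} := perm (@sigma_inj g).

Lemma pi_mul g h : pi (m g h) = (pi g * pi h)%g.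
Proof.
apply/permP => c; rewrite permM !permE; apply: val_inj => /=.
apply: idx_eq; rewrite invM (mulA _ g h) mulA mulgK.
exact: idx_spec.
Qed.

Lemma pi_ker g : pi g = 1%g -> N g.
Proof.
move=> /(congr1 (fun p : {perm Q0} => val (p (cz one)))).
rewrite perm1 permE /= -{2}(idx_can one) => /idx_eqP.
move=> H.
set r := rep (idx one) in H.
have Nr : N r by have := idx_spec one; rewrite mul1 => /NV; rewrite invK.
by have := NM (NM (NV Nr) H) Nr; rewrite -(mulA r g) mulKg mulgKV.
Qed.

Lemma pi_loc g0 : \forall g \near g0, pi g = pi g0.
Proof.
have h : forall c : Q0, \forall g \near g0, sigma g c = sigma g0 c.
  move=> c; set r := rep (val c).
  have cv : (fun g => m (m r g) (inv (m r g0))) @ g0 --> one.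
    rewrite -(mulVr (m r g0)).
    apply: mul_cvg; last exact: cvg_cst.
    by apply: mul_cvg; [exact: cvg_cst|exact: cvg_id].
  have hN : \forall g \near g0, N (m (m r g) (inv (m r g0))) := cv N nN.
  apply: filterS hN => g /= Hg; apply: val_inj => /=.
  exact: idx_eq.
apply: filterS (filter_forall _ h) => g hg.
by apply/permP => c; rewrite !permE hg.
Qed.

Lemma pi1 : pi one = 1%g.
Proof. by apply: (mulgI (pi one)); rewrite -pi_mul mul1 mulg1. Qed.

Lemma piV g : pi (inv g) = ((pi g)^-1)%g.
Proof. by apply: (mulgI (pi g)); rewrite -pi_mul mulVr pi1 mulgV. Qed.

Definition PiS : {set {perm Q0}} := finset (fun p => `[< exists g, pi g = p >]).

Lemma pi_in g : pi g \in PiS.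
Proof. by rewrite /PiS finset.in_set; apply/asboolP; exists g. Qed.

Lemma PiS_group : group_set PiS.
Proof.
apply/group_setP; split; first by have := pi_in one; rewrite pi1.
move=> x y; rewrite /PiS !finset.in_set => /asboolP [g <-] /asboolP [h <-].
by apply/asboolP; exists (m g h); exact: pi_mul.
Qed.
Canonical PiG := Group PiS_group.

Lemma pre_closed (A : {set {perm Q0}}) : closed (fun g => pi g \in A).
Proof.
rewrite -[X in closed X]setCK; apply: open_closedC; rewrite openE => g0 /= ng0.
by apply: filterS (pi_loc g0) => g /= ->.
Qed.

Lemma pre_subgroup (A : {group {perm Q0}}) : is_subgroup G (fun g => pi g \in A).
Proof.
split => /=; first by rewrite pi1 group1.
  by move=> x y Ax Ay; rewrite pi_mul groupM.
by move=> x Ax; rewrite piV groupV.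
Qed.

Lemma PiG_compl : (forall H, is_closed_subgroup G H ->
    exists K, is_closed_subgroup G K /\ perm_complement G H K) ->
  complemented PiG.
Proof.
move=> C Hb sHb.
have [K [[sgK clK] [_ [decomp tiPK]]]] := C _ (conj (@pre_subgroup Hb) (@pre_closed Hb)).
pose KbS : {set {perm Q0}} := finset (fun p => `[< exists2 k, K k & pi k = p >]).
have KbG : group_set KbS.
  apply/group_setP; split.
    by rewrite finset.in_set; apply/asboolP; exists one; [case: sgK|exact: pi1].
  move=> x y; rewrite !finset.in_set => /asboolP [g Kg <-] /asboolP [h Kh <-].
  by apply/asboolP; exists (m g h); [case: sgK => _ + _; apply|rewrite pi_mul].
have sKb : KbS \subset PiG.
  apply/fintype.subsetP => p; rewrite finset.in_set => /asboolP [k _ <-]; exact: pi_in.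
exists (Group KbG); split => //.
- apply/eqP; rewrite finset.eqEsubset mul_subG //=.
  apply/fintype.subsetP => p; rewrite finset.in_set => /asboolP [g <-].
  have [h [k [Hh Kk ->]]] := decomp g.
  rewrite pi_mul; apply: mem_mulg => //.
  by rewrite finset.in_set; apply/asboolP; exists k.
- apply/trivgP/fintype.subsetP => p; rewrite finset.in_set => /andP[pH].
  rewrite finset.in_set => /asboolP [k Kk ek]; subst p.
  have : ((fun g => pi g \in Hb) `&` K) k by split.
  by rewrite tiPK => ->; rewrite pi1 finset.in_set1.
Qed.

End Quot.
End TopG.

Section Pointed.
Context (T : topologicalType) (G : topGroup T).
Definition Tp : Type := T.
HB.instance Definition _ := Topological.on Tp.
HB.instance Definition _ := isPointed.Build Tp (tg_one G).
Lemma compact_cover_T : compact [set: T] -> cover_compact [set: T].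
Proof.
move=> h; have h2 : @compact Tp setT := h.
by rewrite (@compact_cover Tp) in h2.
Qed.
End Pointed.

Unset Implicit Arguments.

Theorem corollary2p6 (T : topologicalType) (G : topGroup T) :
  profinite_C G -> metabelian G.
Proof.
move=> [[cT hT tdT] C] x y Dx Dy.
apply: contrapT => nxy.
set z := tg_mul G (tg_mul G x y) (tg_inv G (tg_mul G y x)).
have z1 : tg_one G <> z.
  move=> e; apply: nxy; have := congr1 (fun w => tg_mul G w (tg_mul G y x)) e.
  by rewrite /z mulgKV mul1.
have [U [cU U1 nUz]] := zd_sep cT hT tdT z1.
pose N := stabr G U.
have sgN : is_subgroup G N := stabr_subgroup G U.
have nN : nbhs (tg_one G) N := stabr_nbhs G cT cU.
have [s cov] : exists s : seq T, forall g, exists2 y, y \in s & N (tg_mul G g (tg_inv G y)).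
  have cc := compact_cover_T G cT.
  have [|g _|D' _ covD] := cc T setT (fun y => [set h | N (tg_mul G h (tg_inv G y))]).
  - move=> w _; rewrite openE => h0 /= Nh0.
    have cv : (fun h => tg_mul G h (tg_inv G h0)) @ h0 --> tg_one G.
      by rewrite -(mulVr G h0); apply: mul_cvg; [exact: cvg_id|exact: cvg_cst].
    have hN : \forall h \near h0, N (tg_mul G h (tg_inv G h0)) := cv N nN.
    apply: filterS hN => h /= Hh.
    by have := NM sgN Hh Nh0; rewrite -mulA mulKg.
  - by exists g => //=; rewrite mulVr; exact: N1.
  exists (finmap.enum_fset D') => g; have [w Dw Nw] := covD g I.
  by exists w.
have abD := compl_metabelian (leqnn _) (@PiG_compl _ _ _ sgN nN s cov C).
have piD g : derived_subgroup G g -> pi sgN cov g \in ((PiG sgN cov)^`(1))%g.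
  move=> Dg; apply: (Dg (fun g => pi sgN cov g \in ((PiG sgN cov)^`(1))%g)).
    exact: (@pre_subgroup _ _ _ sgN _ cov (((PiG sgN cov)^`(1))%g)%G).
  move=> a b; rewrite /commutator !pi_mul !piV.
  have := mem_commg (pi_in sgN cov a) (pi_in sgN cov b).
  by rewrite /commg /conjg !mulgA.
have ec : commute (pi sgN cov x) (pi sgN cov y) := (centsP abD) _ (piD x Dx) _ (piD y Dy).
have pz : pi sgN cov z = 1%g.
  by rewrite /z pi_mul piV !pi_mul ec mulgV.
apply: nUz; apply: (@stabr_sub _ G U U1); exact: (pi_ker pz).
Qed.
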